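(* Let $\mathbf x_1,\dots,\mathbf x_l\in\mathbb{R}^n$, $y_1,\dots,y_l\in\mathbb{R}$, let $\mathbf X\in\mathbb{R}^{l\times n}$ have $i$-th row $\mathbf x_i^T$ and $\mathbf y=(y_1,\dots,y_l)^T$. For $C>0$ let $\mathbf w^*(C)$ be the optimal solution of the least absolute deviations problem $$\min_{\mathbf w}\tfrac12\|\mathbf w\|^2+C\sum_{i=1}^l|y_i-\mathbf w^T\mathbf x_i|,$$ and $\theta^*(C)$ an optimal solution of its dual $\min_{\theta\in[-1,1]^l}\frac C2\|\mathbf X^T\theta\|^2-\langle\mathbf y,\theta\rangle$. Let $0<C_1<\dots<C_{\mathcal K}$ and suppose $\mathbf w^*(C_k)$ is known for some integer $1\le k<\mathcal K$. Then $[\theta^*(C_{k+1})]_i=-1$ (i.e., $i\in\mathcal R$) if $$\tfrac{C_{k+1}+C_k}{2C_k}\langle\mathbf w^*(C_k),\mathbf x_i\rangle-\tfrac{C_{k+1}-C_k}{2C_k}\|\mathbf w^*(C_k)\|\,\|\mathbf x_i\|>y_i,$$ and $[\theta^*(C_{k+1})]_i=1$ (i.e., $i\in\mathcal L$) if $$\tfrac{C_{k+1}+C_k}{2C_k}\langle\mathbf w^*(C_k),\mathbf x_i\rangle+\tfrac{C_{k+1}-C_k}{2C_k}\|\mathbf w^*(C_k)\|\,\|\mathbf x_i\|<y_i.$$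
   Context: Primal and dual solutions satisfy $\mathbf w^*(C)=C\mathbf X^T\theta^*(C)$. At parameter $C=C_{k+1}$: $\mathcal R=\{i:\langle\mathbf w^*(C),\mathbf x_i\rangle>y_i\}$ and $\mathcal L=\{i:\langle\mathbf w^*(C),\mathbf x_i\rangle<y_i\}$. *)

(* Defs.v *)
From HB Require Import structures.
From mathcomp Require Import all_boot all_order all_algebra.
From mathcomp Require Import reals.
Set Implicit Arguments. Unset Strict Implicit. Unset Printing Implicit Defensive.
Import Order.TTheory GRing.Theory Num.Theory.
Local Open Scope ring_scope.

Section LAD.
Variables (R : realType) (l n : nat).

Definition dotv (u v : 'I_n -> R) : R := \sum_(j < n) u j * v j.
Definition normv (u : 'I_n -> R) : R := Num.sqrt (dotv u u).

(* X^T theta, where X has i-th row x_i^T *)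
Definition XT (x : 'I_l -> 'I_n -> R) (theta : 'I_l -> R) : 'I_n -> R :=
  fun j => \sum_(i < l) theta i * x i j.

Definition lad_primal (x : 'I_l -> 'I_n -> R) (y : 'I_l -> R) (C : R)
  (w : 'I_n -> R) : R :=
  2^-1 * dotv w w + C * \sum_(i < l) `|y i - dotv w (x i)|.

Definition primal_opt x y C (w : 'I_n -> R) : Prop :=
  forall w', lad_primal x y C w <= lad_primal x y C w'.

Definition lad_dual (x : 'I_l -> 'I_n -> R) (y : 'I_l -> R) (C : R)
  (theta : 'I_l -> R) : R :=
  C / 2 * dotv (XT x theta) (XT x theta) - \sum_(i < l) y i * theta i.

Definition dual_feasible (theta : 'I_l -> R) : Prop :=
  forall i, -1 <= theta i <= 1.

Definition dual_opt x y C (theta : 'I_l -> R) : Prop :=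
  dual_feasible theta /\
  forall theta', dual_feasible theta' -> lad_dual x y C theta <= lad_dual x y C theta'.

End LAD.

(* Main.v *)
Require Import Defs.
From HB Require Import structures.
From mathcomp Require Import all_boot all_order all_algebra.
From mathcomp Require Import reals.
From mathcomp Require Import lra ring.
Import Order.TTheory GRing.Theory Num.Theory.
Local Open Scope ring_scope.

Section H.
Variables (R : realType) (l n : nat).
Implicit Types (u v z p q : 'I_n -> R).

Lemma dotvC u v : dotv u v = dotv v u.
Proof. by apply: eq_bigr => j _; rewrite mulrC. Qed.

Lemma dotv_ext u u' v v' : (forall j, u j = u' j) -> (forall j, v j = v' j) ->
  dotv u v = dotv u' v'.
Proof. by move=> h1 h2; apply: eq_bigr => j _; rewrite h1 h2. Qed.

Lemma dotv_ge0 u : 0 <= dotv u u.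
Proof. by apply: sumr_ge0 => j _; rewrite -expr2 sqr_ge0. Qed.

Lemma dotvZl a u z : dotv (fun j => a * u j) z = a * dotv u z.
Proof. rewrite /dotv mulr_sumr; apply: eq_bigr => j _; ring. Qed.

Lemma dotvZr a u z : dotv z (fun j => a * u j) = a * dotv z u.
Proof. rewrite /dotv mulr_sumr; apply: eq_bigr => j _; ring. Qed.

Lemma dotv_aff p q t z : dotv (fun j => p j + t * (q j - p j)) z =
  dotv p z + t * (dotv q z - dotv p z).
Proof.
rewrite /dotv -sumrB mulr_sumr -big_split /=; apply: eq_bigr => j _; ring.
Qed.

Lemma dotvBl p q z : dotv (fun j => p j - q j) z = dotv p z - dotv q z.
Proof. rewrite /dotv -sumrB; apply: eq_bigr => j _; ring. Qed.

Lemma dotvBr p q z : dotv z (fun j => p j - q j) = dotv z p - dotv z q.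
Proof. rewrite /dotv -sumrB; apply: eq_bigr => j _; ring. Qed.

Lemma dot_expand p q t :
  dotv (fun j => p j + t * (q j - p j)) (fun j => p j + t * (q j - p j)) =
  dotv p p + 2 * t * (dotv p q - dotv p p) + t ^+ 2 * dotv (fun j => q j - p j) (fun j => q j - p j).
Proof.
rewrite /dotv -!sumrB !mulr_sumr -!big_split /=; apply: eq_bigr => j _; ring.
Qed.

Lemma dot_expand2 p q a b :
  dotv (fun j => a * p j - b * q j) (fun j => a * p j - b * q j) =
  a ^+ 2 * dotv p p - 2 * a * b * dotv q p + b ^+ 2 * dotv q q.
Proof.
rewrite /dotv !mulr_sumr -sumrB -!big_split /=; apply: eq_bigr => j _; ring.
Qed.

Lemma dotv_zero u : dotv u u = 0 -> forall z, dotv u z = 0.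
Proof.
move=> h z.
have h0 : forall j, u j * u j = 0.
  move=> j; apply: (psumr_eq0P (P := xpredT) _ h) => // i _.
  by rewrite -expr2 sqr_ge0.
rewrite /dotv big1 // => j _.
have /eqP := h0 j; rewrite mulf_eq0 orbb => /eqP ->; by rewrite mul0r.
Qed.

Lemma CS u v : dotv u v <= normv u * normv v.
Proof.
set s := normv u; set q := normv v.
have hs : s ^+ 2 = dotv u u by rewrite sqr_sqrtr // dotv_ge0.
have hq : q ^+ 2 = dotv v v by rewrite sqr_sqrtr // dotv_ge0.
have s0 : 0 <= s by apply: sqrtr_ge0.
have q0 : 0 <= q by apply: sqrtr_ge0.
have := dotv_ge0 (fun j => q * u j - s * v j).
rewrite dot_expand2 -hs -hq (dotvC v u) => H.
have [qs0|] := ltP 0 (q * s).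
  have : 0 <= (q * s) * (q * s - dotv u v) by nra.
  by rewrite pmulr_rge0 // subr_ge0 mulrC.
move=> qs0.
have : q * s = 0 by apply/eqP; rewrite eq_le qs0 mulr_ge0.
move/eqP; rewrite mulf_eq0 => /orP[] /eqP h.
  by rewrite dotvC dotv_zero -?hq ?h ?expr0n // mulr0.
by rewrite dotv_zero -?hs ?h ?expr0n // mul0r.
Qed.

Lemma CSn u v : - dotv u v <= normv u * normv v.
Proof.
have e1 : dotv (fun j => - u j) v = - dotv u v.
  rewrite -mulN1r -dotvZl; by apply: dotv_ext => k //; rewrite mulN1r.
have e2 : normv (fun j => - u j) = normv u.
  rewrite /normv; congr Num.sqrt; apply: eq_bigr => j _; ring.
by rewrite -e1 -e2; apply: CS.
Qed.

Lemma lim0 (A B : R) : 0 <= B -> (forall t : R, 0 < t -> t <= 1 -> 0 <= A + t * B) -> 0 <= A.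
Proof.
move=> B0 h; have [//|hA] := leP 0 A.
have BA : 0 < B - A by lra.
pose t := - A / (B - A).
have t0 : 0 < t by apply: divr_gt0; lra.
have t1 : t <= 1 by rewrite ler_pdivrMr //; lra.
have e : t * (B - A) = - A by rewrite /t mulrVK // unitfE gt_eqF.
have := h t t0 t1; nra.
Qed.

Lemma XT_aff (x : 'I_l -> 'I_n -> R) (th th' : 'I_l -> R) t j :
  XT x (fun i => th i + t * (th' i - th i)) j = XT x th j + t * (XT x th' j - XT x th j).
Proof. rewrite /XT -sumrB mulr_sumr -big_split /=; apply: eq_bigr => i _; ring. Qed.

Lemma dotv_XT (x : 'I_l -> 'I_n -> R) (s : 'I_l -> R) v :
  dotv v (XT x s) = \sum_(i < l) s i * dotv v (x i).
Proof.
rewrite /dotv /XT; under eq_bigr do rewrite mulr_sumr.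
rewrite exchange_big; apply: eq_bigr => i _; rewrite mulr_sumr.
by apply: eq_bigr => j _; ring.
Qed.

End H.

Theorem corollary6 (R : realType) (l n : nat)
  (x : 'I_l -> 'I_n -> R) (y : 'I_l -> R)
  (K : nat) (Cs : nat -> R)
  (HC1 : 0 < Cs 1%N)
  (Hinc : forall j : nat, (1 <= j)%N -> (j < K)%N -> Cs j < Cs j.+1)
  (k : nat) (Hk1 : (1 <= k)%N) (HkK : (k < K)%N)
  (w : 'I_n -> R) (Hw : primal_opt x y (Cs k) w)
  (theta : 'I_l -> R) (Htheta : dual_opt x y (Cs k.+1) theta) :
  forall i : 'I_l,
    ((Cs k.+1 + Cs k) / (2 * Cs k) * dotv w (x i)
       - (Cs k.+1 - Cs k) / (2 * Cs k) * normv w * normv (x i) > y i ->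
     theta i = -1)
  /\
    ((Cs k.+1 + Cs k) / (2 * Cs k) * dotv w (x i)
       + (Cs k.+1 - Cs k) / (2 * Cs k) * normv w * normv (x i) < y i ->
     theta i = 1).
Proof.
have Cmono : forall j, (1 <= j)%N -> (j <= K)%N -> Cs 1 <= Cs j.
  elim=> [//|j IH] _ hj.
  case: (posnP j) => [-> //|j0].
  apply: le_trans (IH j0 (ltnW hj)) _; apply: ltW; exact: Hinc.
have CC' : Cs k < Cs k.+1 by apply: Hinc.
have C0 : 0 < Cs k by apply: lt_le_trans HC1 (Cmono k Hk1 (ltnW HkK)).
move: CC' C0 Hw Htheta; set C := Cs k; set C' := Cs k.+1 => CC' C0 Hw [Hfeas Hopt].
have C'0 : 0 < C' by lra.
have sum_aff : forall (s s' : 'I_l -> R) t, \sum_(i < l) y i * (s i + t * (s' i - s i))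
   = \sum_(i < l) y i * s i + t * (\sum_(i < l) y i * s' i - \sum_(i < l) y i * s i).
  move=> s s' t; rewrite -sumrB mulr_sumr -big_split /=; apply: eq_bigr => j _; ring.
have VI : forall th', dual_feasible th' ->
   C' * dotv (XT x theta) (XT x theta) - \sum_(i < l) y i * theta i <=
   C' * dotv (XT x theta) (XT x th') - \sum_(i < l) y i * th' i.
  move=> th' Hf; rewrite -subr_ge0.
  apply: (@lim0 _ _ (C' / 2 * dotv (fun j => XT x th' j - XT x theta j)
                                    (fun j => XT x th' j - XT x theta j))).
    by apply: mulr_ge0; [lra | apply: dotv_ge0].
  move=> t t0 t1.
  have Hft : dual_feasible (fun i => theta i + t * (th' i - theta i)).
    move=> i; have := Hfeas i; have := Hf i; move=> /andP[a1 a2] /andP[b1 b2].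
    apply/andP; split; nra.
  have := Hopt _ Hft; rewrite /lad_dual sum_aff.
  have -> : dotv (XT x (fun i => theta i + t * (th' i - theta i)))
                 (XT x (fun i => theta i + t * (th' i - theta i))) =
     dotv (fun j => XT x theta j + t * (XT x th' j - XT x theta j))
          (fun j => XT x theta j + t * (XT x th' j - XT x theta j)).
    by apply: dotv_ext => j; rewrite XT_aff.
  rewrite dot_expand => H.
  have : 0 <= t * (C' * dotv (XT x theta) (XT x th') - \sum_(i < l) y i * th' i -
    (C' * dotv (XT x theta) (XT x theta) - \sum_(i < l) y i * theta i) +
   t * (C' / 2 * dotv (fun j => XT x th' j - XT x theta j)
                                    (fun j => XT x th' j - XT x theta j))).
    rewrite -subr_ge0 in H; nra.
  by rewrite pmulr_rge0.
pose zP i := dotv (XT x theta) (x i).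
have coord : forall i c, -1 <= c <= 1 -> 0 <= (c - theta i) * (C' * zP i - y i).
  move=> i c hc.
  pose th' := fun j => if j == i then c else theta j.
  have Hf : dual_feasible th' by move=> j; rewrite /th'; case: eqP => _ //; apply: Hfeas.
  have := VI th' Hf; rewrite -subr_ge0 !dotv_XT.
  have -> : C' * (\sum_(i < l) th' i * dotv (XT x theta) (x i)) - \sum_(i < l) y i * th' i -
    (C' * (\sum_(i < l) theta i * dotv (XT x theta) (x i)) - \sum_(i < l) y i * theta i) =
    \sum_(j < l) (th' j - theta j) * (C' * zP j - y j).
    rewrite !mulr_sumr -!sumrB; apply: eq_bigr => j _; rewrite /zP; ring.
  rewrite (bigD1 i) //= big1 ?addr0; first by rewrite /th' eqxx.
  by move=> j /negbTE hj; rewrite /th' hj subrr mul0r.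
pose g v := \sum_(i < l) `|y i - dotv v (x i)|.
have gw : \sum_(i < l) y i * theta i - dotv w (XT x theta) <= g w.
  rewrite dotv_XT -sumrB; apply: ler_sum => i _.
  have := Hfeas i => /andP[a1 a2].
  have -> : y i * theta i - theta i * dotv w (x i) = theta i * (y i - dotv w (x i)) by ring.
  apply: le_trans (ler_norm _) _; rewrite normrM; apply: ler_piMl => //.
  by rewrite ler_norml a1 a2.
have [u hu] : exists u : 'I_n -> R, forall j, u j = C' * XT x theta j.
  by exists (fun j => C' * XT x theta j).
have du : forall z, dotv u z = C' * dotv (XT x theta) z.
  by move=> z; rewrite -dotvZl; apply: dotv_ext.
have gu : g u <= \sum_(i < l) y i * theta i - C' * dotv (XT x theta) (XT x theta).
  pose th' := fun i => if y i <= C' * zP i then -1 else 1 : R.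
  have Hf : dual_feasible th'.
    by move=> j; rewrite /th'; case: ifP => _; apply/andP; split; lra.
  have := VI th' Hf; rewrite [dotv _ (XT x th')]dotv_XT.
  have -> : C' * (\sum_(i < l) th' i * dotv (XT x theta) (x i)) - \sum_(i < l) y i * th' i
     = - g u.
    rewrite /g mulr_sumr -sumrB -sumrN; apply: eq_bigr => i _; rewrite du /th'.
    case: ifP => h.
      rewrite ler0_norm; last by rewrite subr_le0.
      ring.
    rewrite ger0_norm; last by move/negbT: h; rewrite -ltNge subr_ge0 => /ltW.
    ring.
  lra.
have Hprim : C * (g w - g u) <= dotv w u - dotv w w.
  rewrite -subr_ge0.
  apply: (@lim0 _ _ (2^-1 * dotv (fun j => u j - w j) (fun j => u j - w j))).
    by apply: mulr_ge0; [lra | apply: dotv_ge0].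
  move=> t t0 t1.
  have gconv : g (fun j => w j + t * (u j - w j)) <= (1 - t) * g w + t * g u.
    rewrite /g !mulr_sumr -big_split /=; apply: ler_sum => i _; rewrite dotv_aff.
    have -> : y i - (dotv w (x i) + t * (dotv u (x i) - dotv w (x i))) =
      (1 - t) * (y i - dotv w (x i)) + t * (y i - dotv u (x i)) by ring.
    apply: le_trans (ler_normD _ _) _.
    rewrite !normrM (ger0_norm (_ : 0 <= 1 - t)) ?(ger0_norm (ltW t0)) //; lra.
  have := Hw (fun j => w j + t * (u j - w j)); rewrite /lad_primal dot_expand.
  have := ler_wpM2l (ltW C0) gconv.
  move=> h1 h2; fold (g w) (g (fun j => w j + t * (u j - w j))) in h2.
  have : 0 <= t * (dotv w u - dotv w w - C * (g w - g u) +
     t * (2^-1 * dotv (fun j => u j - w j) (fun j => u j - w j))) by nra.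
  by rewrite pmulr_rge0.
have dw : dotv w u = C' * dotv w (XT x theta).
  by rewrite -dotvZr; apply: dotv_ext.
have key : C * (C' * dotv (XT x theta) (XT x theta) - dotv w (XT x theta)) <=
   C' * dotv w (XT x theta) - dotv w w.
  have : C' * dotv (XT x theta) (XT x theta) - dotv w (XT x theta) <= g w - g u by lra.
  move/(ler_wpM2l (ltW C0)); lra.
pose a := (C' + C) / (2 * C).
pose d := fun j => C' * XT x theta j - a * w j.
have dd : dotv d d = C' ^+ 2 * dotv (XT x theta) (XT x theta)
   - 2 * C' * a * dotv w (XT x theta) + a ^+ 2 * dotv w w.
  by rewrite /d dot_expand2.
pose r := (C' - C) / (2 * C) * normv w.
have r0 : 0 <= r.
  apply: mulr_ge0; last by apply: sqrtr_ge0.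
  apply: divr_ge0; lra.
have rr : r ^+ 2 = ((C' - C) / (2 * C)) ^+ 2 * dotv w w.
  by rewrite /r exprMn sqr_sqrtr // dotv_ge0.
have ddle : dotv d d <= r ^+ 2.
  have e : dotv d d - r ^+ 2 = C' / C * (C * (C' * dotv (XT x theta) (XT x theta)
     - dotv w (XT x theta)) - (C' * dotv w (XT x theta) - dotv w w)).
    rewrite dd rr /a; field; lra.
  rewrite -subr_le0 e; apply: mulr_ge0_le0; last by lra.
  apply: divr_ge0; lra.
have nd : normv d <= r.
  rewrite /normv -(ger0_norm r0) -sqrtr_sqr; exact: ler_wsqrtr.
have ddx : forall i, dotv d (x i) = C' * zP i - a * dotv w (x i).
  by move=> i; rewrite /d dotvBl !dotvZl.
move=> i; have nx := sqrtr_ge0 (dotv (x i) (x i)).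
have b1 := @CSn _ _ d (x i); have b2 := @CS _ _ d (x i).
have b3 : normv d * normv (x i) <= r * normv (x i) by apply: ler_wpM2r.
rewrite ddx in b1 b2; rewrite /r in b3.
have := Hfeas i => /andP[f1 f2].
split => h.
  have p0 : 0 < C' * zP i - y i by rewrite /a in b1 b2; nra.
  have := coord i (-1) ltac:(lra); rewrite pmulr_lge0 // subr_ge0 => h1.
  by apply/eqP; rewrite eq_le h1 f1.
have p0 : 0 < - (C' * zP i - y i) by rewrite /a in b1 b2; nra.
have := coord i 1 ltac:(lra).
rewrite -mulrNN pmulr_lge0 // => h1.
apply/eqP; rewrite eq_le f2 /=; lra.
Qed.
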